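(* For every integer $\ell\ge 0$ and every $\mathbf z=(z_1,\dots,z_{K-1})\in[0,1]^{K-1}$, $$G_\ell(z_1,\dots,z_{K-1})=(1-r)\,\zeta_-(z_1,\dots,z_{K-1})^{\ell}\prod_{\kappa=1}^{K-1}\frac{1-z_\kappa\,\zeta_-(z_1,\dots,z_\kappa)}{1-z_\kappa\,\zeta_-(z_1,\dots,z_{\kappa-1})},$$ and all denominators in this product are strictly positive on $[0,1]^{K-1}$. In particular $P(\mathbf 0)=G_0(0,\dots,0)=1-r$ and $G_\ell=G_0\cdot\zeta_-(z_1,\dots,z_{K-1})^\ell$.
   Context: Fix integers $c\ge 1$, $K\ge 2$ and reals $r_1,\dots,r_K>0$ with $r=\sum_{k=1}^K r_k<1$ (here $r_k=\lambda_k/(c\mu)$ for an M/M/$c$ queue with $K$ non-preemptive priority levels, level 1 the highest, Poisson arrival rates $\lambda_k$ and common exponential service rate $\mu$). Write $\sigma_k=\sum_{j=1}^k r_j$ ($\sigma_0=0$, $\sigma_K=r$), $\mathbf e_\kappa$ for the standard unit vectors of $\mathbb Z^K$, $\delta_{ij}$ for the Kronecker delta. Consider the equations for $(p_{\mathbf n})_{\mathbf n\in\mathbb N_0^K}$, with the convention $p_{\mathbf n}=0$ if some component of $\mathbf n$ is negative: $$(1+r)p_{\mathbf n}=\Big(\prod_{j=1}^K\delta_{0n_j}\Big)p_{\mathbf n}+\sum_{\kappa=1}^K\Big[r_\kappa p_{\mathbf n-\mathbf e_\kappa}+\Big(\prod_{j=1}^{\kappa-1}\delta_{0n_j}\Big)p_{\mathbf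 n+\mathbf e_\kappa}\Big],\quad \mathbf n\in\mathbb N_0^K .$$ These are the stationary balance equations for the states in which all $c$ servers are busy and $n_\kappa$ clients of level $\kappa$ wait in the queue; their nonnegative summable solutions form a one-dimensional cone, and $P$ denotes the unique solution with $\sum_{\mathbf n}P(\mathbf n)=1$ (the joint queue-length distribution conditional on all servers busy). For $\kappa=0,1,\dots,K-1$ and $z_1,\dots,z_\kappa\in[0,1]$ define $\beta(z_1,\dots,z_\kappa)=\sum_{k=1}^\kappa z_k r_{K+1-k}$ (so $\beta()=0$) and $$\zeta_\pm(z_1,\dots,z_\kappa)=\tfrac12\Big[1+r-\beta\pm\sqrt{(1+r-\beta)^2-4\sigma_{K-\kappa}}\Big],\quad \beta=\beta(z_1,\dots,z_\kappa),$$ the two real roots of $\zeta^2-(1+r-\beta)\zeta+\sigma_{K-\kappa}=0$ (the discriminant is positive there); in particular $\zeta_+()=1$, $\zeta_-()=r$. For $\ell\ge0$ define the generating function $$G_\ell(z_1,\dots,z_{K-1})=\sum_{n_2,\dots,n_K\ge0}P(\ell,n_2,\dots,n_K)\prod_{j=2}^K z_{K+1-j}^{\,n_j},$$ so $z_1$ is paired with the lowest level $K$ and $z_{K-1}$ with level $2$. *)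

(* Defs.v *)
From HB Require Import structures.
From mathcomp Require Import all_boot all_order all_algebra.
From mathcomp Require Import all_classical all_reals.
From mathcomp Require Import ereal esum.
Set Implicit Arguments. Unset Strict Implicit. Unset Printing Implicit Defensive.
Import Order.TTheory GRing.Theory Num.Theory.
Local Open Scope ring_scope.

(* Conventions: priority levels are 1..K.  The rates r_k are given as a
   function r : nat -> R, read at k = 1..K.  The variables z_1..z_{K-1} are
   given as z : nat -> R, read at k = 1..K-1.  A queue state
   n = (n_1,..,n_K) is an element of {ffun 'I_K -> nat}, where the ordinal i
   stands for the level i+1. *)

Section QueueDefs.
Variable R : realType.

Definition sigma (r : nat -> R) (k : nat) : R := \sum_(1 <= j < k.+1) r j.

Definition beta (K : nat) (r z : nat -> R) (kappa : nat) : R :=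
  \sum_(1 <= k < kappa.+1) z k * r (K.+1 - k)%N.

Definition zeta_minus (K : nat) (r z : nat -> R) (kappa : nat) : R :=
  let b := beta K r z kappa in
  (1 + sigma r K - b
     - Num.sqrt ((1 + sigma r K - b) ^+ 2 - 4 * sigma r (K - kappa)%N)) / 2.

Definition state (K : nat) := {ffun 'I_K -> nat}.

(* n - e_i and n + e_i (the first only used when n_i > 0) *)
Definition dec_st (K : nat) (n : state K) (i : 'I_K) : state K :=
  [ffun j => if j == i then (n j).-1 else n j].
Definition inc_st (K : nat) (n : state K) (i : 'I_K) : state K :=
  [ffun j => if j == i then (n j).+1 else n j].

(* The balance equations, with the convention p_{n} = 0 if some component
   of n is negative. Ordinal i corresponds to level kappa = i+1, so the
   product over j = 1..kappa-1 of delta_{0 n_j} is the condition that n_j = 0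
   for all ordinals j < i. *)
Definition balance (K : nat) (r : nat -> R) (p : state K -> R) : Prop :=
  forall n : state K,
    (1 + sigma r K) * p n =
      (if [forall j : 'I_K, n j == 0%N] then p n else 0)
      + \sum_(i < K)
          (r i.+1 * (if (0 < n i)%N then p (dec_st n i) else 0)
           + (if [forall j : 'I_K, (j < i)%N ==> (n j == 0%N)]
              then p (inc_st n i) else 0)).

(* G_ell(z_1..z_{K-1}) = sum over n with n_1 = ell of
   p(n) prod_{j=2}^K z_{K+1-j}^{n_j}; ordinal i (level i+1) pairs with
   z_{K-i}. Sum of nonnegative terms, taken in the extended reals. *)
Definition G (K : nat) (z : nat -> R) (p : state K -> R) (ell : nat) : \bar R :=
  (\esum_(n in [set n : state K | forall i : 'I_K, val i = 0%N -> n i = ell])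
     (p n * \prod_(i < K | (1 <= i)%N) z (K - i)%N ^+ n i)%:E)%E.

End QueueDefs.

(* Main.v *)
Require Import Defs.
From HB Require Import structures.
From mathcomp Require Import all_boot all_order all_algebra.
From mathcomp Require Import all_classical all_reals.
From mathcomp Require Import ereal esum.
From mathcomp Require Import topology normedtype sequences.
From mathcomp Require Import ring lra zify.
Set Implicit Arguments. Unset Strict Implicit. Unset Printing Implicit Defensive.
Import Order.TTheory GRing.Theory Num.Theory.
Local Open Scope ring_scope.

Section Combi.
Variable K : nat.
Implicit Types (n : state K) (i : 'I_K).

Definition lump (j : nat) n : nat := (\sum_(i < K | (i < j)%N) n i)%N.

Lemma dec_incK n i : dec_st (inc_st n i) i = n.
Proof. by apply/ffunP => k; rewrite /dec_st /inc_st !ffunE; case: eqP => // ->; rewrite ffunE eqxx. Qed.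

Lemma inc_decK n i : (0 < n i)%N -> inc_st (dec_st n i) i = n.
Proof.
move=> h; apply/ffunP => k; rewrite /dec_st /inc_st !ffunE; case: eqP => // ->.
by rewrite prednK.
Qed.

Lemma inc_st_eq n i : inc_st n i i = (n i).+1.
Proof. by rewrite /inc_st ffunE eqxx. Qed.
Lemma inc_st_neq n i k : k != i -> inc_st n i k = n k.
Proof. by rewrite /inc_st ffunE => /negPf ->. Qed.
Lemma dec_st_neq n i k : k != i -> dec_st n i k = n k.
Proof. by rewrite /dec_st ffunE => /negPf ->. Qed.

Lemma lump_inc_lt j n i : (i < j)%N -> lump j (inc_st n i) = (lump j n).+1.
Proof.
move=> ij; rewrite /lump (bigD1 i) //= [in RHS](bigD1 i) //= inc_st_eq addSn.
congr (_.+1 + _)%N; apply: eq_bigr => k /andP[_ ki]; exact: inc_st_neq.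
Qed.

Lemma lump_inc_ge j n i : (j <= i)%N -> lump j (inc_st n i) = lump j n.
Proof.
move=> ij; apply: eq_bigr => k kj; apply: inc_st_neq.
by apply: contraTneq kj => ->; rewrite -leqNgt.
Qed.

Lemma lump_dec_lt j n i : (i < j)%N -> (0 < n i)%N -> lump j (dec_st n i) = (lump j n).-1.
Proof.
move=> ij h; rewrite -{2}(inc_decK h) lump_inc_lt //.
Qed.

End Combi.

Section EsumExtra.
Variables (R : realType) (T : choiceType).
Local Open Scope ereal_scope.
Local Open Scope classical_set_scope.

Lemma esumZl (I : set T) (a : T -> \bar R) (c : R) : (0 <= c)%R ->
  (forall x, 0 <= a x) ->
  \esum_(x in I) (c%:E * a x) = c%:E * \esum_(x in I) a x.
Proof.
move=> c0 a0; rewrite /esum -ereal_supZl //; last first.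
  apply/set0P; exists 0; exists set0; first exact: fsets_set0.
  by rewrite fsbig_set0.
congr ereal_sup; apply/seteqP; split => y /=.
- move=> [A [finA AI] <-]; exists (\sum_(x \in A) a x); first by exists A.
  by rewrite !fsbig_finite //= ge0_sume_distrr.
- move=> [z [A [finA AI] <-] <-]; exists A => //.
  by rewrite !fsbig_finite //= ge0_sume_distrr.
Qed.

Lemma esum_subset_le (I J : set T) (a : T -> \bar R) :
  I `<=` J -> (forall x, 0 <= a x) ->
  \esum_(x in I) a x <= \esum_(x in J) a x.
Proof.
move=> IJ a0; rewrite (esum_mkcond I) (esum_mkcond J); apply: le_esum => x _.
case: ifPn => xI; first by rewrite ifT // inE; apply: IJ; rewrite -inE.
by case: ifP.
Qed.

Lemma esum_part (a : T -> \bar R) (g : T -> nat) : (forall x, 0 <= a x) ->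
  \esum_(x in [set: T]) a x =
  \sum_(m <oo) \esum_(x in [set x | g x = m]) a x.
Proof.
move=> a0; rewrite nneseries_esumT; last by move=> m; apply: esum_ge0.
rewrite -esum_bigcupT //; last first.
  by move=> i j _ _ [x [/= <- <-]].
congr esum; apply/seteqP; split => x // _; by exists (g x).
Qed.

End EsumExtra.

Section Geom.
Variable R : realType.
Local Open Scope ereal_scope.

Lemma eseries_geom (c q : R) : (0 <= q < 1)%R ->
  \sum_(k <oo) ((c * q ^+ k)%:E) = (c / (1 - q))%:E.
Proof.
move=> /andP[q0 q1].
have h : (`|q| < 1)%R by rewrite ger0_norm.
have cv := @cvg_geometric_series R c q h.
rewrite (_ : (fun n => _) = (EFin \o series (geometric c q))); last first.
  apply/funext => n /=; rewrite /series /= -sumEFin; apply: eq_bigr => k _.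
  by [].
rewrite EFin_lim; last exact: is_cvg_geometric_series.
have /(@cvg_unique _ (@Rhausdorff R)) := cv.
by move/(_ _ (@is_cvg_geometric_series _ c _ h)) => ->.
Qed.

End Geom.

Section RecGeom.
Variable R : realType.

Lemma zeta_facts (a s : R) : 0 <= s -> 1 + s <= a ->
  let sq := Num.sqrt (a ^+ 2 - 4 * s) in
  [/\ 0 <= sq, sq ^+ 2 = a ^+ 2 - 4 * s,
      1 <= (a + sq) / 2, ((a - sq) / 2) * ((a + sq) / 2) = s &
      0 <= (a - sq) / 2 <= s].
Proof.
move=> s0 sa sq.
have D0 : 0 <= a ^+ 2 - 4 * s.
  have h1 : (1 + s) * (1 + s) <= a * a by apply: ler_pM; lra.
  have h2 := sqr_ge0 (1 - s); rewrite expr2 in h2.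
  rewrite expr2; lra.
have sq0 : 0 <= sq by rewrite sqrtr_ge0.
have sq2 : sq ^+ 2 = a ^+ 2 - 4 * s by rewrite sqr_sqrtr.
have zp1 : 1 <= (a + sq) / 2.
  have : 2 - a <= sq by nra.
  lra.
have prod : ((a - sq) / 2) * ((a + sq) / 2) = s.
  have -> : ((a - sq) / 2) * ((a + sq) / 2) = (a ^+ 2 - sq ^+ 2) / 4 by field.
  by rewrite sq2; field.
split => //; apply/andP; split; nra.
Qed.
Lemma rec_geom (a s : R) (l : nat -> R) :
  0 <= s -> 1 + s <= a ->
  (forall n, 0 <= l n) ->
  (forall N, \sum_(k < N) l k <= 1) ->
  (forall n, l n.+2 = a * l n.+1 - s * l n) ->
  forall n, l n = l 0%N * ((a - Num.sqrt (a ^+ 2 - 4 * s)) / 2) ^+ n.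
Proof.
move=> s0 sa l0 lsum lrec.
have [sq0 sq2 zp1 prod /andP[zm0 zms]] := zeta_facts s0 sa.
set sq := Num.sqrt _ in sq0 sq2 zp1 prod zm0 zms *.
set zm := (a - sq) / 2 in prod zm0 zms *.
set zp := (a + sq) / 2 in zp1 prod *.
have azz : a = zm + zp by rewrite /zm /zp; field.
pose d n := l n.+1 - zm * l n.
have dn n : d n = zp ^+ n * d 0%N.
  elim: n => [|n IH]; first by rewrite expr0 mul1r.
  rewrite exprS -mulrA -IH /d lrec azz -prod; ring.
have d00 : d 0%N = 0.
  apply/eqP; apply: contraT => dne.
  have e0 : 0 < `|d 0%N| by rewrite normr_gt0.
  pose N := Num.bound ((1 + zm) / `|d 0%N|).
  have hN : (1 + zm) / `|d 0%N| < N%:R.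
    by apply: archi_boundP; apply: divr_ge0; lra.
  have hsum : \sum_(k < N) d k = d 0%N * \sum_(k < N) zp ^+ k.
    rewrite mulr_sumr; apply: eq_bigr => k _; rewrite dn mulrC //.
  have hge : N%:R <= \sum_(k < N) zp ^+ k.
    have -> : N%:R = \sum_(k < N) (1 : R) by rewrite sumr_const card_ord.
    by apply: ler_sum => k _; apply: exprn_ege1.
  have hd : \sum_(k < N) d k = \sum_(k < N) l k.+1 - zm * \sum_(k < N) l k.
    by rewrite /d sumrB mulr_sumr.
  have s1 : \sum_(k < N) l k.+1 <= 1.
    by have := lsum N.+1; rewrite big_ord_recl; have := l0 0%N; lra.
  have s2 : 0 <= \sum_(k < N) l k.+1 by apply: sumr_ge0 => k _.
  have s3 : 0 <= \sum_(k < N) l k by apply: sumr_ge0 => k _.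
  have s4 := lsum N.
  have habs : `|\sum_(k < N) d k| <= 1 + zm.
    have hz : zm * \sum_(k < N) l k <= zm * 1 by apply: ler_wpM2l.
    have hz' : 0 <= zm * \sum_(k < N) l k by apply: mulr_ge0.
    rewrite ler_norml hd; apply/andP; split; lra.
  move: habs; rewrite hsum normrM (ger0_norm (_ : 0 <= \sum_(k < N) zp ^+ k)); last first.
    by apply: sumr_ge0 => k _; apply: exprn_ge0; lra.
  move=> habs.
  have : (1 + zm) < `|d 0%N| * N%:R.
    by move: hN; rewrite ltr_pdivrMr // mulrC.
  have : `|d 0%N| * N%:R <= `|d 0%N| * \sum_(k < N) zp ^+ k.
    by apply: ler_wpM2l => //; apply: ltW.
  lra.
have step n : l n.+1 = zm * l n.
  by have := dn n; rewrite d00 mulr0 /d => /eqP; rewrite subr_eq0 => /eqP.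
elim => [|n IH]; first by rewrite expr0 mulr1.
by rewrite step IH exprS; ring.
Qed.

End RecGeom.

Section SumLemmas.
Variable R : realType.

Lemma sum_rev (F : nat -> R) (M j : nat) : (j <= M)%N ->
  \sum_(j <= i < M) F (M - i)%N = \sum_(1 <= k < (M - j).+1) F k.
Proof.
elim: M => [|M IH] jM.
  by move: jM; rewrite leqn0 => /eqP ->; rewrite !big_geq.
move: jM; rewrite leq_eqVlt => /orP[/eqP ->|jM].
  by rewrite subnn !big_geq.
rewrite big_nat_recl // subSn // big_nat_recr //=.
rewrite addrC; congr (_ + _).
rewrite -IH //; apply: eq_bigr => i _; by rewrite subSS.
Qed.

Lemma sum_ord_ge (F : nat -> R) (K j : nat) : (j <= K)%N ->
  \sum_(i < K | (j <= i)%N) F i = \sum_(j <= i < K) F i.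
Proof.
move=> jK; rewrite -big_mkord (big_cat_nat (leq0n j) jK) /=.
rewrite big_nat_cond big1 ?add0r; last first.
  by move=> i /andP[/andP[_ h1] h2]; rewrite leqNgt h1 in h2.
rewrite big_nat_cond [RHS]big_nat_cond; apply: eq_bigl => i.
by case/boolP: (j <= i)%N => h; rewrite ?andbT ?andbF // h.
Qed.

Lemma sum_ord_lt (F : nat -> R) (K j : nat) : (j <= K)%N ->
  \sum_(i < K | (i < j)%N) F i = \sum_(0 <= i < j) F i.
Proof.
move=> jK; rewrite -(big_mkord (fun i => (i < j)%N) F) (big_cat_nat (leq0n j) jK) /=.
rewrite [X in _ + X]big_nat_cond [X in _ + X]big1 ?addr0; last first.
  by move=> i /andP[/andP[h1 _] h2]; rewrite leqNgt h2 in h1.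
rewrite big_nat_cond [RHS]big_nat_cond; apply: eq_bigl => i.
by case/boolP: (i < j)%N => h; rewrite ?andbT ?andbF.
Qed.

Lemma sigma_split (r : nat -> R) (K k : nat) : (k <= K)%N ->
  sigma r K = sigma r (K - k)%N + \sum_(1 <= m < k.+1) r (K.+1 - m)%N.
Proof.
elim: k => [|k IH] kK; first by rewrite subn0 big_geq // addr0.
rewrite IH ?(ltnW kK) // [in RHS]big_nat_recr //=.
suff -> : sigma r (K - k) = sigma r (K - k.+1) + r (K.+1 - k.+1)%N by ring.
rewrite /sigma.
have -> : (K - k)%N = (K - k.+1).+1 by rewrite subnS prednK // subn_gt0.
by rewrite big_nat_recr //= subSS -subSn.
Qed.

End SumLemmas.

Section Main.
Local Open Scope classical_set_scope.
Variables (R : realType) (K : nat) (r : nat -> R) (p : state K -> R) (z : nat -> R).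
Hypothesis HK : (2 <= K)%N.
Hypothesis rpos : forall k : nat, (1 <= k <= K)%N -> 0 < r k.
Hypothesis sig1 : sigma r K < 1.
Hypothesis p0 : forall n : state K, 0 <= p n.
Hypothesis psum : (\esum_(n in [set: state K]) (p n)%:E)%E = 1%E.
Hypothesis bal : balance r p.
Hypothesis zb : forall k : nat, (1 <= k <= K.-1)%N -> 0 <= z k <= 1.

Definition wt (j : nat) (n : state K) : R :=
  \prod_(i < K | (j <= i)%N) z (K - i)%N ^+ n i.

Definition ff (j : nat) (n : state K) : \bar R := (p n * wt j n)%:E.

Definition LL (j m : nat) : \bar R :=
  (\esum_(n in [set n : state K | lump j n = m]) ff j n)%E.

Lemma zK_bounds (j : nat) (i : 'I_K) : (1 <= j)%N -> (j <= i)%N ->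
  0 <= z (K - i)%N <= 1.
Proof.
move=> j1 ji; apply: zb; apply/andP; split.
  by rewrite subn_gt0.
rewrite -subn1 leq_sub2l //; exact: leq_trans ji.
Qed.

Lemma wt_ge0 j n : (1 <= j)%N -> 0 <= wt j n.
Proof.
move=> j1; apply: prodr_ge0 => i ji; apply: exprn_ge0.
by case/andP: (zK_bounds j1 ji).
Qed.

Lemma wt_le1 j n : (1 <= j)%N -> wt j n <= 1.
Proof.
move=> j1; apply: prodr_ile1 => i ji; have /andP[h1 h2] := zK_bounds j1 ji.
by rewrite exprn_ge0 // exprn_ile1.
Qed.

Lemma ff_ge0 j n : (1 <= j)%N -> (0 <= ff j n)%E.
Proof. by move=> j1; rewrite lee_fin mulr_ge0 // wt_ge0. Qed.

Lemma ff_le j n : (1 <= j)%N -> (ff j n <= (p n)%:E)%E.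
Proof. by move=> j1; rewrite lee_fin ler_piMr // ?wt_le1. Qed.

Lemma esum_ff_le1 j (S : set (state K)) : (1 <= j)%N ->
  (\esum_(n in S) ff j n <= 1)%E.
Proof.
move=> j1; rewrite -psum; apply: (@le_trans _ _ (\esum_(n in S) (p n)%:E)%E).
  by apply: le_esum => n _; apply: ff_le.
by apply: esum_subset_le => // n; rewrite lee_fin.
Qed.

Lemma LL_ge0 j m : (1 <= j)%N -> (0 <= LL j m)%E.
Proof. by move=> j1; apply: esum_ge0 => n _; apply: ff_ge0. Qed.

Lemma LL_fin j m : (1 <= j)%N -> LL j m = (fine (LL j m))%:E.
Proof.
move=> j1; rewrite fineK //; apply/fin_numPlt/andP; split.
  by apply: (lt_le_trans _ (LL_ge0 m j1)); rewrite ltNye.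
by apply: (le_lt_trans (esum_ff_le1 _ j1)); rewrite ltey.
Qed.


Lemma wt_inc j n (i : 'I_K) :
  wt j (inc_st n i) = (if (j <= i)%N then z (K - i)%N * wt j n else wt j n).
Proof.
rewrite /wt; case: ifP => ji.
  rewrite (bigD1 i) //= [in RHS](bigD1 i) //= inc_st_eq exprS -mulrA.
  congr (_ * (_ * _)); apply: eq_bigr => k /andP[_ ki]; by rewrite inc_st_neq.
apply: eq_bigr => k jk; rewrite inc_st_neq //.
by apply/negP => /eqP ki; rewrite ki ji in jk.
Qed.

Lemma esumA j l (i : 'I_K) : (1 <= j)%N ->
  (\esum_(n in [set n | lump j n = l.+1])
     (r i.+1 * (if (0 < n i)%N then p (dec_st n i) else 0) * wt j n)%:E)%E
  = ((r i.+1)%:E * (if (i < j)%N then LL j l else (z (K - i)%N)%:E * LL j l.+1))%E.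
Proof.
move=> j1.
have r0 : 0 <= r i.+1 by apply: ltW; apply: rpos; rewrite /= ltn_ord.
rewrite (eq_esum (b := fun n => if n \in [set n : state K | (0 < n i)%N]
   then (r i.+1 * p (dec_st n i) * wt j n)%:E else 0%E)); last first.
  move=> n _; case: (boolP (0 < n i)%N) => h; first by rewrite mem_set.
  by rewrite memNset ?mulr0 ?mul0r //; apply/negP.
rewrite -esum_mkcondr.
have key : forall P : set (state K),
    set_bij P ([set n | lump j n = l.+1] `&` [set n | (0 < n i)%N])
      (fun m => inc_st m i) ->
    (\esum_(n in [set n | lump j n = l.+1] `&` [set n | (0 < n i)%N])
       (r i.+1 * p (dec_st n i) * wt j n)%:E =
     \esum_(m in P) (r i.+1 * p m * wt j (inc_st m i))%:E)%E.
  move=> P hb; rewrite (reindex_esum P _ _ _ hb); apply: eq_esum => m _.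
  by rewrite dec_incK.
case: ltnP => ij.
  rewrite (key [set n | lump j n = l]); last first.
    split.
    - by move=> m /= Hm; split => /=; rewrite ?inc_st_eq // lump_inc_lt // Hm.
    - by move=> m1 m2 _ _ /(congr1 (fun n => dec_st n i)); rewrite !dec_incK.
    - move=> n [/= Hn ni]; exists (dec_st n i); last by rewrite inc_decK.
      by rewrite /= lump_dec_lt // Hn.
  rewrite /LL -esumZl //; last by move=> n; apply: ff_ge0.
  apply: eq_esum => m _; rewrite wt_inc leqNgt ij /= /ff -EFinM mulrA //.
rewrite (key [set n | lump j n = l.+1]); last first.
  split.
  - by move=> m /= Hm; split => /=; rewrite ?inc_st_eq // lump_inc_ge // Hm.
  - by move=> m1 m2 _ _ /(congr1 (fun n => dec_st n i)); rewrite !dec_incK.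
  - move=> n [/= Hn ni]; exists (dec_st n i); last by rewrite inc_decK.
    by rewrite /= -Hn -[in RHS](inc_decK ni) lump_inc_ge.
have z0 : 0 <= z (K - i)%N by case/andP: (zK_bounds j1 ij).
rewrite /LL -esumZl //; last by move=> n; apply: ff_ge0.
rewrite -esumZl //; last by move=> n; rewrite -EFinM lee_fin mulr_ge0 // mulr_ge0 // wt_ge0.
apply: eq_esum => m _; rewrite wt_inc ij /ff -!EFinM; congr (_%:E); ring.
Qed.

Definition cfirst (j : nat) (i : 'I_K) (m : state K) : bool :=
  [&& (i < j)%N, (0 < m i)%N & [forall k : 'I_K, (k < i)%N ==> (m k == 0%N)]].

Lemma first_idx j (m : state K) (x : \bar R) : (0 < lump j m)%N ->
  (\sum_(i < K) (if cfirst j i m then x else 0) = x)%E.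
Proof.
move=> lp.
pose P := fun i : 'I_K => (i < j)%N && (0 < m i)%N.
have : [exists i, P i].
  apply: contraTT lp => /existsPn h; rewrite -leqNgt leqn0; apply/eqP.
  apply: big1 => i ij; move: (h i); rewrite /P ij /= -leqNgt leqn0 => /eqP //.
case/existsP => i1 Pi1.
case: (@arg_minnP _ i1 P (fun i => val i) Pi1) => i0 /andP[i0j mi0] minP.
have c0 : cfirst j i0 m.
  rewrite /cfirst i0j mi0 /=; apply/forallP => k; apply/implyP => ki.
  apply/negPn/negP; rewrite -lt0n => mk.
  have := minP k; rewrite /P mk andbT (ltn_trans ki i0j) => /(_ isT).
  by rewrite leqNgt ki.
rewrite (bigD1 i0) //= c0 big1 ?adde0 // => i ii0; case: ifP => // /and3P[ij mi /forallP fa].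
have := minP i; rewrite /P ij mi => /(_ isT); rewrite leq_eqVlt => /orP[/eqP e|lt].
  by move: ii0; rewrite (val_inj e) eqxx.
by move: (fa i0); rewrite lt /= => /eqP h; rewrite h in mi0.
Qed.

Lemma esumB j l : (1 <= j)%N ->
  (\sum_(i < K) \esum_(n in [set n | lump j n = l.+1])
     (if (i < j)%N && [forall k : 'I_K, (k < i)%N ==> (n k == 0%N)]
      then p (inc_st n i) * wt j n else 0)%:E)%E = LL j l.+2.
Proof.
move=> j1.
have -> : LL j l.+2 = (\esum_(m in [set n | lump j n = l.+2])
    \sum_(i < K) (if cfirst j i m then ff j m else 0))%E.
  by apply: eq_esum => m /= hm; rewrite first_idx // hm.
rewrite esum_sum; last by move=> m i _ _; case: ifP => // _; apply: ff_ge0.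
apply: eq_bigr => i _.
case: (ltnP i j) => ij; last first.
  rewrite esum1 //.
  by rewrite esum1 // => n _; rewrite /cfirst ltnNge ij.
pose D := [set n : state K | [forall k : 'I_K, (k < i)%N ==> (n k == 0%N)]].
pose C := [set m : state K | cfirst j i m].
rewrite /=.
have -> : (\esum_(n in [set n | lump j n = l.+1])
     (if [forall k : 'I_K, (k < i)%N ==> (n k == 0%N)]
      then p (inc_st n i) * wt j n else 0)%:E =
   \esum_(n in [set n | lump j n = l.+1] `&` D) (p (inc_st n i) * wt j n)%:E)%E.
  rewrite esum_mkcondr; apply: eq_esum => n _.
  case: (boolP [forall k : 'I_K, (k < i)%N ==> (n k == 0%N)]) => h.
    by rewrite mem_set.
  by rewrite memNset //; apply/negP.
have -> : (\esum_(m in [set n | lump j n = l.+2])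
     (if cfirst j i m then ff j m else 0) =
   \esum_(m in [set n | lump j n = l.+2] `&` C) ff j m)%E.
  rewrite esum_mkcondr; apply: eq_esum => n _.
  case: (boolP (cfirst j i n)) => h.
    by rewrite mem_set.
  by rewrite memNset //; apply/negP.
rewrite (reindex_esum ([set n | lump j n = l.+1] `&` D) ([set n | lump j n = l.+2] `&` C) (fun n => inc_st n i)).
  by apply: eq_esum => n _; rewrite /ff wt_inc leqNgt ij.
rewrite /C /D; split.
- move=> n [/= hn /forallP hD]; split => /=; first by rewrite lump_inc_lt // hn.
  rewrite /cfirst ij inc_st_eq /=; apply/forallP => k; apply/implyP => ki.
  have := hD k; rewrite ki /= inc_st_neq //.
  by apply/negP => /eqP e; move: ki; rewrite e ltnn.
- by move=> m1 m2 _ _ /(congr1 (fun n => dec_st n i)); rewrite !dec_incK.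
- move=> m [/= hm /and3P[_ mi /forallP fa]]; exists (dec_st m i); last by rewrite inc_decK.
  split => /=; first by rewrite lump_dec_lt // hm.
  apply/forallP => k; apply/implyP => ki; rewrite dec_st_neq; first by have := fa k; rewrite ki.
  by apply/negP => /eqP e; move: ki; rewrite e ltnn.
Qed.

Lemma lump_pos_nz j (n : state K) l : lump j n = l.+1 ->
  [forall k : 'I_K, (k < j)%N ==> (n k == 0%N)] = false.
Proof.
move=> hl; apply/negbTE/negP => /forallP h.
have : lump j n = 0%N by apply: big1 => i ij; apply/eqP; have := h i; rewrite ij.
by rewrite hl.
Qed.

Lemma bal_pt j (n : state K) l : lump j n = l.+1 ->
  (1 + sigma r K) * (p n * wt j n) =
  \sum_(i < K) (r i.+1 * (if (0 < n i)%N then p (dec_st n i) else 0) * wt j n)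
  + \sum_(i < K) (if (i < j)%N && [forall k : 'I_K, (k < i)%N ==> (n k == 0%N)]
                  then p (inc_st n i) * wt j n else 0).
Proof.
move=> hl; have hz := lump_pos_nz hl.
have nz : [forall k : 'I_K, n k == 0%N] = false.
  apply/negbTE/negP => /forallP h; move: hz.
  suff -> : [forall k : 'I_K, (k < j)%N ==> (n k == 0%N)] by [].
  by apply/forallP => k; rewrite h implybT.
rewrite mulrA bal nz add0r mulr_suml -big_split /=; apply: eq_bigr => i _.
rewrite mulrDl; congr (_ + _).
case: (ltnP i j) => ij /=; first by case: ifP => _; rewrite ?mul0r.
case: ifP => h; last by rewrite mul0r.
move: hz; suff -> : [forall k : 'I_K, (k < j)%N ==> (n k == 0%N)] by [].
apply/forallP => k; apply/implyP => kj.
by move/forallP: h => /(_ k) /implyP; apply; apply: leq_trans ij.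
Qed.

Lemma rec_LL j l : (1 <= j)%N ->
  ((1 + sigma r K)%:E * LL j l.+1 =
   \sum_(i < K) ((r i.+1)%:E *
      (if (i < j)%N then LL j l else (z (K - i)%N)%:E * LL j l.+1))
   + LL j l.+2)%E.
Proof.
move=> j1.
have s0 : 0 <= 1 + sigma r K.
  apply: addr_ge0 => //; rewrite /sigma big_nat_cond.
  apply: sumr_ge0 => k /andP[/andP[k1 kK] _].
  by apply: ltW; apply: rpos; rewrite k1 -ltnS.
have r0 : forall i : 'I_K, 0 <= r i.+1.
  by move=> i; apply: ltW; apply: rpos; rewrite /= ltn_ord.
rewrite /LL -esumZl //; last by move=> n; apply: ff_ge0.
rewrite (eq_esum (b := fun n : state K =>
  (\sum_(i < K) (r i.+1 * (if (0 < n i)%N then p (dec_st n i) else 0) * wt j n)%:E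
   + \sum_(i < K) (if (i < j)%N && [forall k : 'I_K, (k < i)%N ==> (n k == 0%N)]
                  then p (inc_st n i) * wt j n else 0)%:E)%E)); last first.
  by move=> n /= hn; rewrite /ff -EFinM (bal_pt hn) EFinD !sumEFin.
rewrite esumD; first last.
- move=> n _; apply: sume_ge0 => i _; rewrite lee_fin; case: ifP => // _.
  by rewrite mulr_ge0 // wt_ge0.
- move=> n _; apply: sume_ge0 => i _; rewrite lee_fin mulr_ge0 ?wt_ge0 //.
  by rewrite mulr_ge0 //; case: ifP.
rewrite esum_sum; last first.
  by move=> n i _ _; rewrite lee_fin mulr_ge0 ?wt_ge0 // mulr_ge0 //; case: ifP.
rewrite esum_sum; last first.
  by move=> n i _ _; rewrite lee_fin; case: ifP => // _; rewrite mulr_ge0 ?wt_ge0.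
rewrite (esumB l j1); congr (_ + _); apply: eq_bigr => i _.
by rewrite esumA.
Qed.

Definition ll j m := fine (LL j m).

Lemma r_ge0 k : (1 <= k <= K)%N -> 0 <= r k.
Proof. by move=> h; apply: ltW; apply: rpos. Qed.

Lemma sigma_ge0 j : (j <= K)%N -> 0 <= sigma r j.
Proof.
move=> jK; rewrite /sigma big_nat_cond; apply: sumr_ge0 => k /andP[/andP[k1 kj] _].
by apply: r_ge0; rewrite k1 /=; apply: leq_trans jK.
Qed.

Lemma ab_facts j : (1 <= j <= K)%N ->
  [/\ 0 <= sigma r j, 1 + sigma r j <= 1 + sigma r K - beta K r z (K - j)
    & sigma r j <= sigma r K].
Proof.
case/andP => j1 jK.
have hs := sigma_split r (leq_subr j K).
rewrite subKn // in hs.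
have hb : beta K r z (K - j) <= \sum_(1 <= m < (K - j).+1) r (K.+1 - m)%N.
  rewrite /beta big_nat_cond [X in _ <= X]big_nat_cond.
  apply: ler_sum => m /andP[/andP[m1 mK] _].
  have rm : 0 <= r (K.+1 - m)%N.
    by apply: r_ge0; apply/andP; split; lia.
  have /andP[z0 z1] : 0 <= z m <= 1.
    by apply: zb; apply/andP; split; lia.
  by rewrite ler_piMl.
have hr : 0 <= \sum_(1 <= m < (K - j).+1) r (K.+1 - m)%N.
  rewrite big_nat_cond; apply: sumr_ge0 => m /andP[/andP[m1 mK] _].
  by apply: r_ge0; apply/andP; split; lia.
split; first exact: sigma_ge0; lra.
Qed.

Lemma split_sum j x0 x1 : (1 <= j <= K)%N ->
  \sum_(i < K) r i.+1 * (if (i < j)%N then x0 else z (K - i)%N * x1) =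
  sigma r j * x0 + beta K r z (K - j) * x1.
Proof.
case/andP => j1 jK.
rewrite (bigID (fun i : 'I_K => (i < j)%N)) /=; congr (_ + _).
  rewrite (eq_bigr (fun i : 'I_K => r i.+1 * x0)); last by move=> i ->.
  rewrite -mulr_suml (sum_ord_lt (fun i => r i.+1) jK); congr (_ * _).
  by rewrite /sigma big_add1.
rewrite (eq_bigr (fun i : 'I_K => (r i.+1 * z (K - i)%N) * x1)); last first.
  by move=> i /negbTE ->; rewrite mulrA.
rewrite -mulr_suml; congr (_ * _).
under eq_bigl => i do rewrite -leqNgt.
rewrite (sum_ord_ge (fun i => r i.+1 * z (K - i)%N) jK).
rewrite (eq_big_nat _ _ (F2 := fun i => (fun k => z k * r (K.+1 - k)%N) (K - i)%N)); last first.
  move=> i /andP[ji iK] /=; rewrite mulrC; congr (_ * r _); lia.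
by rewrite /beta; exact: (sum_rev (fun k => z k * r (K.+1 - k)%N) jK).
Qed.

Lemma rec_real j l : (1 <= j <= K)%N ->
  ll j l.+2 = (1 + sigma r K - beta K r z (K - j)) * ll j l.+1 - sigma r j * ll j l.
Proof.
move=> hj; have j1 : (1 <= j)%N by case/andP: hj.
have H := rec_LL l j1.
rewrite (LL_fin l.+1 j1) (LL_fin l j1) (LL_fin l.+2 j1) in H.
rewrite (_ : (\sum_(i < K) _)%E = (\sum_(i < K) r i.+1 * (if (i < j)%N then ll j l
    else z (K - i)%N * ll j l.+1))%:E) in H; last first.
  rewrite -sumEFin; apply: eq_bigr => i _; case: ifP => _; by rewrite -?EFinM.
rewrite split_sum // -EFinM -EFinD in H.
case: H => H; rewrite /ll in H *.
set x0 := fine (LL j l) in H *; set x1 := fine (LL j l.+1) in H *.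
set x2 := fine (LL j l.+2) in H *.
have -> : x2 = (1 + sigma r K) * x1 - (sigma r j * x0 + beta K r z (K - j) * x1).
  by rewrite H; ring.
ring.
Qed.

Lemma sum_ll j N : (1 <= j)%N -> \sum_(k < N) ll j k <= 1.
Proof.
move=> j1; rewrite -lee_fin -sumEFin.
under eq_bigr => k _ do rewrite /ll -(LL_fin k j1).
apply: (@le_trans _ _ (\sum_(k <oo) LL j k)%E).
  have := @nneseries_lim_ge R (fun k => LL j k) xpredT 0%N N (fun k _ _ => LL_ge0 k j1).
  by rewrite big_mkord.
rewrite /LL -esum_part; last by move=> n; apply: ff_ge0.
exact: esum_ff_le1.
Qed.

Lemma ll_ge0 j m : (1 <= j)%N -> 0 <= ll j m.
Proof. by move=> j1; rewrite /ll fine_ge0 // LL_ge0. Qed.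

Lemma ll_geom j m : (1 <= j <= K)%N ->
  ll j m = ll j 0%N * zeta_minus K r z (K - j) ^+ m.
Proof.
move=> hj; have j1 : (1 <= j)%N by case/andP: hj.
have [s0 sa _] := ab_facts hj.
rewrite /zeta_minus subKn; last by case/andP: hj.
apply: (rec_geom s0 sa) => //.
- by move=> n; apply: ll_ge0.
- by move=> N; apply: sum_ll.
- by move=> n; apply: rec_real.
Qed.

Lemma zeta_bnd j : (1 <= j <= K)%N ->
  0 <= zeta_minus K r z (K - j) <= sigma r j.
Proof.
move=> hj; have [s0 sa _] := ab_facts hj.
rewrite /zeta_minus subKn; last by case/andP: hj.
by have [] := zeta_facts s0 sa.
Qed.

Lemma series_LL j y : (1 <= j)%N -> 0 <= y ->
  (\sum_(m <oo) ((y ^+ m)%:E * LL j m) =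
   \esum_(n in [set: state K]) ((y ^+ lump j n)%:E * ff j n))%E.
Proof.
move=> j1 y0; rewrite (@esum_part _ _ _ (lump j)); last first.
  by move=> n; apply: mule_ge0; [rewrite lee_fin exprn_ge0 | apply: ff_ge0].
apply: eq_eseriesr => m _; rewrite /LL -esumZl //; last by move=> n; apply: ff_ge0.
by apply: eq_esum => n /= ->.
exact: exprn_ge0.
Qed.

Lemma lump_S j (jK : (j < K)%N) (n : state K) :
  lump j.+1 n = (n (Ordinal jK) + lump j n)%N.
Proof.
rewrite /lump (bigD1 (Ordinal jK)) //=; congr (_ + _)%N.
apply: eq_bigl => i.
have e : (i == Ordinal jK) = (val i == j) by [].
by rewrite ltnS leq_eqVlt e; case: ltngtP.
Qed.

Lemma wt_S j (jK : (j < K)%N) (n : state K) :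
  wt j n = z (K - j)%N ^+ n (Ordinal jK) * wt j.+1 n.
Proof.
rewrite /wt (bigD1 (Ordinal jK)) //=; congr (_ * _).
apply: eq_bigl => i.
have e : (i == Ordinal jK) = (val i == j) by [].
by rewrite leq_eqVlt e; case: ltngtP.
Qed.

Lemma conn j (jK : (j < K)%N) : (1 <= j)%N ->
  (\sum_(m <oo) ((z (K - j)%N ^+ m)%:E * LL j m) =
   \sum_(m <oo) ((z (K - j)%N ^+ m)%:E * LL j.+1 m))%E.
Proof.
move=> j1.
have /andP[y0 y1] : 0 <= z (K - j)%N <= 1 by apply: zb; apply/andP; split; lia.
rewrite !series_LL //; apply: eq_esum => n _.
rewrite /ff -!EFinM; congr (_%:E).
by rewrite lump_S exprD wt_S; ring.
Qed.

Lemma series_geom_LL j y : (1 <= j <= K)%N -> 0 <= y <= 1 ->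
  (\sum_(m <oo) ((y ^+ m)%:E * LL j m) =
   (ll j 0%N / (1 - y * zeta_minus K r z (K - j)))%:E)%E.
Proof.
move=> hj /andP[y0 y1]; have j1 : (1 <= j)%N by case/andP: hj.
have [_ _ sjK] := ab_facts hj.
have /andP[zt0 zt1] := zeta_bnd hj.
rewrite -eseries_geom; last first.
  apply/andP; split; first exact: mulr_ge0.
  apply: (le_lt_trans (y := 1 * sigma r j)); last first.
  by rewrite mul1r; apply: le_lt_trans sjK sig1.
  by apply: ler_pM.
apply: eq_eseriesr => m _.
by rewrite (LL_fin m j1) -/(ll j m) (ll_geom m hj) -EFinM (@exprMn _ m y); congr (_%:E); ring.
Qed.

Lemma wt_K (n : state K) : wt K n = 1.
Proof. by rewrite /wt big_pred0 // => i; rewrite leqNgt ltn_ord. Qed.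

Lemma LL_K0 : LL K 0%N = (p [ffun => 0%N])%:E.
Proof.
rewrite /LL (_ : [set n | lump K n = 0%N] = [set [ffun => 0%N]]).
  rewrite esum_set1; first by rewrite /ff wt_K mulr1.
  by apply: ff_ge0; lia.
apply/seteqP; split => n /=.
  move/eqP; rewrite /lump sum_nat_eq0 => /forallP h; apply/ffunP => i.
  by rewrite ffunE; apply/eqP; have := h i; rewrite ltn_ord.
by move=> ->; rewrite /lump big1 // => i _; rewrite ffunE.
Qed.

Lemma zeta0 : zeta_minus K r z 0%N = sigma r K.
Proof.
have s0 : 0 <= sigma r K by apply: sigma_ge0.
rewrite /zeta_minus /beta big_geq // subr0 subn0.
rewrite (_ : (1 + sigma r K) ^+ 2 - 4 * sigma r K = (1 - sigma r K) ^+ 2); last by ring.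
rewrite sqrtr_sqr ger0_norm; last by rewrite subr_ge0 ltW.
by field.
Qed.

Lemma llK0 : ll K 0%N = 1 - sigma r K.
Proof.
have hK : (1 <= K <= K)%N by rewrite leqnn andbT; lia.
have h := series_geom_LL hK (_ : 0 <= 1 <= 1); rewrite lexx ler01 in h.
have := h isT.
rewrite subnn zeta0 mul1r.
rewrite series_LL //; last by lia.
rewrite (eq_esum (b := fun n => (p n)%:E)); last first.
  by move=> n _; rewrite /ff wt_K expr1n mul1e mulr1.
rewrite psum => -[h1].
have : 1 - sigma r K != 0 by rewrite subr_eq0; apply: contraTneq sig1 => ->; rewrite ltxx.
move=> hne; by rewrite -[ll K 0](divfK hne) -h1 mul1r.
Qed.

Lemma denom_pos j y : (1 <= j <= K)%N -> 0 <= y <= 1 ->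
  0 < 1 - y * zeta_minus K r z (K - j).
Proof.
move=> hj /andP[y0 y1]; have [_ _ sjK] := ab_facts hj.
have /andP[zt0 zt1] := zeta_bnd hj.
have h1 : y * zeta_minus K r z (K - j) <= 1 * sigma r j by apply: ler_pM.
rewrite subr_gt0; apply: (le_lt_trans h1); rewrite mul1r.
exact: le_lt_trans sjK sig1.
Qed.

Lemma ll_step j (jK : (j < K)%N) : (1 <= j)%N ->
  ll j 0%N = ll j.+1 0%N * (1 - z (K - j)%N * zeta_minus K r z (K - j))
     / (1 - z (K - j)%N * zeta_minus K r z (K - j.+1)).
Proof.
move=> j1.
have hy : 0 <= z (K - j)%N <= 1 by apply: zb; apply/andP; split; lia.
have hj : (1 <= j <= K)%N by rewrite j1 ltnW.
have hj' : (1 <= j.+1 <= K)%N by rewrite jK.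
have := conn jK j1; rewrite (series_geom_LL hj hy) (series_geom_LL hj' hy) => -[h].
have d1 := denom_pos hj hy; have d2 := denom_pos hj' hy.
move: h; set a := 1 - _ * zeta_minus K r z (K - j); set b := 1 - _ * _.
move=> h; have an : a != 0 by rewrite gt_eqF.
have bn : b != 0 by rewrite gt_eqF.
rewrite -[ll j 0%N](divfK an) h; field.
by rewrite bn.
Qed.

Definition ratio (k : nat) : R :=
  (1 - z k * zeta_minus K r z k) / (1 - z k * zeta_minus K r z k.-1).

Lemma ll_prod m : (m < K)%N ->
  ll (K - m) 0%N = (1 - sigma r K) * \prod_(1 <= k < m.+1) ratio k.
Proof.
elim: m => [|m IH] mK; first by rewrite subn0 llK0 big_geq // mulr1.
have jK : (K - m.+1 < K)%N by lia.
rewrite (ll_step jK); last by lia.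
have -> : (K - m.+1).+1 = (K - m)%N by lia.
rewrite IH; last by lia.
rewrite [in RHS]big_nat_recr //= /ratio.
have -> : (K - (K - m.+1))%N = m.+1 by lia.
have -> : (K - (K - m))%N = m by lia.
rewrite /=; ring.
Qed.

Lemma G_LL ell : G z p ell = LL 1 ell.
Proof.
have K0 : (0 < K)%N by lia.
rewrite /G /LL /ff /wt; congr esum; apply/seteqP; split => n /=.
  move=> h; rewrite /lump (bigD1 (Ordinal K0)) //= big1 ?addn0; first exact: h.
  by move=> i /andP[i1 ne]; move: ne; rewrite (_ : i = Ordinal K0) ?eqxx //; apply: val_inj => /=; lia.
move=> h i i0; rewrite -h /lump (bigD1 (Ordinal K0)) //= big1 ?addn0.
  by congr (n _); apply: val_inj.
by move=> k /andP[k1 ne]; move: ne; rewrite (_ : k = Ordinal K0) ?eqxx //; apply: val_inj => /=; lia.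
Qed.

Lemma formula ell : G z p ell =
  ((1 - sigma r K) * zeta_minus K r z K.-1 ^+ ell
     * \prod_(1 <= kappa < K)
         ((1 - z kappa * zeta_minus K r z kappa)
           / (1 - z kappa * zeta_minus K r z kappa.-1)))%:E.
Proof.
have h1 : (1 <= 1 <= K)%N by lia.
rewrite G_LL (LL_fin ell (isT : (1 <= 1)%N)) -/(ll 1 ell) (ll_geom ell h1).
have e : ll 1 0%N = (1 - sigma r K) * \prod_(1 <= k < K) ratio k.
  have KK : (K.-1 < K)%N by lia.
  have := ll_prod KK.
  have e1 : (K - K.-1)%N = 1%N by lia.
  have e2 : (K.-1).+1 = K by lia.
  by rewrite e1 e2.
rewrite e /ratio subn1; congr (_%:E); ring.
Qed.

Lemma p_zero : p [ffun => 0%N] = 1 - sigma r K.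
Proof. by rewrite -llK0 /ll LL_K0. Qed.

End Main.

Unset Implicit Arguments. Set Strict Implicit.

Theorem mainTheorem1 (R : realType) (K : nat) (r : nat -> R) (p : state K -> R) :
  (2 <= K)%N ->
  (forall k : nat, (1 <= k <= K)%N -> 0 < r k) ->
  sigma r K < 1 ->
  (forall n : state K, 0 <= p n) ->
  (\esum_(n in [set: state K]) (p n)%:E)%E = 1%E ->
  balance r p ->
  forall (ell : nat) (z : nat -> R),
    (forall k : nat, (1 <= k <= K.-1)%N -> 0 <= z k <= 1) ->
    [/\ G z p ell =
          ((1 - sigma r K) * zeta_minus K r z K.-1 ^+ ell
           * \prod_(1 <= kappa < K)
               ((1 - z kappa * zeta_minus K r z kappa)
                / (1 - z kappa * zeta_minus K r z kappa.-1)))%:E,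
        (forall kappa : nat, (1 <= kappa <= K.-1)%N ->
           0 < 1 - z kappa * zeta_minus K r z kappa.-1),
        p [ffun => 0%N] = 1 - sigma r K,
        G (fun _ => 0) p 0 = (p [ffun => 0%N])%:E &
        G z p ell = (G z p 0 * (zeta_minus K r z K.-1 ^+ ell)%:E)%E].
Proof.
move=> HK rpos sig1 p0 psum bal ell z zb.
have F := formula HK rpos sig1 p0 psum bal zb.
have z0b : forall k : nat, (1 <= k <= K.-1)%N -> 0 <= (fun _ : nat => (0 : R)) k <= 1.
  by move=> k _; rewrite lexx ler01.
have F0 := formula HK rpos sig1 p0 psum bal z0b.
have pz := p_zero HK rpos sig1 p0 psum bal zb.
split.
- exact: F.
- move=> kappa hk.
  have hj : (1 <= K - kappa.-1 <= K)%N by apply/andP; split; lia.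
  have := denom_pos HK rpos sig1 zb hj (zb kappa hk).
  by rewrite (_ : (K - (K - kappa.-1))%N = kappa.-1) //; lia.
- exact: pz.
- rewrite F0 pz expr0 mulr1 big1 ?mulr1 // => k _.
  by rewrite !mul0r subr0 divr1.
- by rewrite !F expr0 mulr1 -EFinM; congr (_%:E); ring.
Qed.
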